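(* Let $\alpha,\beta,\delta>0$, $\pi_g\in(0,1)$ and $\Delta_g=1/\pi_g-1$. Let $g:\mathbb{R}_+\to\mathbb{R}_+$ be differentiable and strictly increasing with $g(0)=1$ and $g'>0$. For a job $j$ with task intensities $a_j,p_j,r_j\ge 0$ and contact intensity $k_j\ge 0$, define \[ B_j(k_j)=1+(\alpha a_j+\beta p_j)\,g(k_j),\qquad P_j=1+\delta r_j,\qquad U_j=1/P_j,\qquad E_j^\ast=\frac{B_j}{B_j+P_j}. \] For $h\in\{M,g\}$ define \[ V_{hj}=(E_j^\ast)^2\tau^2_{hj}+(1-E_j^\ast)^2U_j, \] where $\tau^2_{Mj}=B_j$ and $\tau^2_{gj}=B_j/\pi_g$. Then: (i) If $a_j=p_j=0$ (a purely routine job), then $V_{Mj}$, $V_{gj}$ and the variance gap $V_{gj}-V_{Mj}$ do not depend on $k_j$. Hence the callback probabilities \[ c_{hj}=1-\Phi\!\left(\bar\theta\sqrt{1+V_{hj}}\right),\qquad \bar\theta>0, \] and the callback gap $c_{Mj}-c_{gj}$ also do not depend on $k_j$. (ii) If $a_j+p_j>0$, then $E_j^\ast$ and the variance gap \[ V_{gj}-V_{Mj}=\Delta_g\,\frac{B_j^3}{(B_j+P_j)^2} \] are strictly increasing in $k_j$. (iii) The cross-partials satisfy \[ \frac{\partial^2 B_j}{\partial k_j\,\partial a_j}=\alpha g'(k_j)>0,\qquad \frac{\partial^2 B_j}{\partial k_j\,\partial p_j}=\beta g'(k_j)>0. \]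
   Context: The setting is an information-based model of hiring. Productivity is $\theta\sim N(0,1)$ for both groups. For a group-$h$ applicant to job $j$ there are two signals: a subjective signal $s^s=\theta+\varepsilon^s$ with $\varepsilon^s\sim N(0,\tau^2_{hj})$, and an objective signal $s^o=\theta+\varepsilon^o$ with $\varepsilon^o\sim N(0,U_j)$. These are independent given $\theta$. The employer forms the composite $E_j^\ast s^s+(1-E_j^\ast)s^o$, and $V_{hj}$ is its noise variance. The callback probability is that of calling back when the posterior mean of $\theta$ given the composite exceeds $\bar\theta$. $\Phi$ is the standard normal cumulative distribution function. Group $M$ is the majority group and group $g$ is a minority group. *)

(* Defs.v *)
From Stdlib Require Import Reals.
From Coquelicot Require Import Coquelicot.
Open Scope R_scope.

Definition std_normal_pdf (t : R) : R := exp (- t ^ 2 / 2) / sqrt (2 * PI).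
Definition Phi (x : R) : R :=
  RInt_gen std_normal_pdf (Rbar_locally m_infty) (at_point x).

Definition Bj (alpha beta : R) (g : R -> R) (a p k : R) : R :=
  1 + (alpha * a + beta * p) * g k.
Definition Pj (delta r : R) : R := 1 + delta * r.
Definition Uj (delta r : R) : R := / Pj delta r.
Definition Estar (alpha beta delta : R) (g : R -> R) (a p r k : R) : R :=
  Bj alpha beta g a p k / (Bj alpha beta g a p k + Pj delta r).

Definition Vvar (tau2 E U : R) : R := E ^ 2 * tau2 + (1 - E) ^ 2 * U.
Definition VM (alpha beta delta : R) (g : R -> R) (a p r k : R) : R :=
  Vvar (Bj alpha beta g a p k) (Estar alpha beta delta g a p r k) (Uj delta r).
Definition Vg (pig alpha beta delta : R) (g : R -> R) (a p r k : R) : R :=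
  Vvar (Bj alpha beta g a p k / pig) (Estar alpha beta delta g a p r k) (Uj delta r).

Definition callback (thetabar V : R) : R := 1 - Phi (thetabar * sqrt (1 + V)).

(* Main.v *)
Require Import Defs.
From Stdlib Require Import Reals.
From Coquelicot Require Import Coquelicot.
Open Scope R_scope.
From Stdlib Require Import Lra.

Lemma Bj00 al be g k : Bj al be g 0 0 k = 1.
Proof. unfold Bj; ring. Qed.

Lemma dBa al be g p k' a : Derive (fun a' => Bj al be g a' p k') a = al * g k'.
Proof. apply is_derive_unique. unfold Bj. auto_derive; auto. ring. Qed.

Lemma dBp al be g a k' p : Derive (fun p' => Bj al be g a p' k') p = be * g k'.
Proof. apply is_derive_unique. unfold Bj. auto_derive; auto. ring. Qed.

Lemma dBk_is (g : R -> R) c k : ex_derive g k ->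
  is_derive (fun k' => 1 + c * g k') k (c * Derive g k).
Proof.
  intro H. auto_derive. auto. rewrite Rmult_1_l. reflexivity.
Qed.


Theorem proposition2
  (alpha beta delta pig : R) (g : R -> R)
  (Halpha : 0 < alpha) (Hbeta : 0 < beta) (Hdelta : 0 < delta)
  (Hpig : 0 < pig < 1)
  (Hg0 : g 0 = 1)
  (Hgpos : forall k, 0 <= k -> 0 <= g k)
  (Hgmono : forall k1 k2, 0 <= k1 -> k1 < k2 -> g k1 < g k2)
  (Hgder : forall k, 0 < k -> ex_derive g k)
  (Hgder_pos : forall k, 0 < k -> 0 < Derive g k) :
  let Deltag := / pig - 1 in
  (* (i) purely routine job *)
  (forall (r thetabar k1 k2 : R), 0 <= r -> 0 < thetabar -> 0 <= k1 -> 0 <= k2 ->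
     VM alpha beta delta g 0 0 r k1 = VM alpha beta delta g 0 0 r k2 /\
     Vg pig alpha beta delta g 0 0 r k1 = Vg pig alpha beta delta g 0 0 r k2 /\
     Vg pig alpha beta delta g 0 0 r k1 - VM alpha beta delta g 0 0 r k1
       = Vg pig alpha beta delta g 0 0 r k2 - VM alpha beta delta g 0 0 r k2 /\
     callback thetabar (VM alpha beta delta g 0 0 r k1)
       = callback thetabar (VM alpha beta delta g 0 0 r k2) /\
     callback thetabar (Vg pig alpha beta delta g 0 0 r k1)
       = callback thetabar (Vg pig alpha beta delta g 0 0 r k2) /\
     callback thetabar (VM alpha beta delta g 0 0 r k1)
       - callback thetabar (Vg pig alpha beta delta g 0 0 r k1)
       = callback thetabar (VM alpha beta delta g 0 0 r k2)
       - callback thetabar (Vg pig alpha beta delta g 0 0 r k2)) /\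
  (* (ii) job with non-routine content *)
  (forall (a p r : R), 0 <= a -> 0 <= p -> 0 <= r -> 0 < a + p ->
     (forall k, 0 <= k ->
        Vg pig alpha beta delta g a p r k - VM alpha beta delta g a p r k
        = Deltag * (Bj alpha beta g a p k) ^ 3
                 / (Bj alpha beta g a p k + Pj delta r) ^ 2) /\
     (forall k1 k2, 0 <= k1 -> k1 < k2 ->
        Estar alpha beta delta g a p r k1 < Estar alpha beta delta g a p r k2 /\
        Vg pig alpha beta delta g a p r k1 - VM alpha beta delta g a p r k1
        < Vg pig alpha beta delta g a p r k2 - VM alpha beta delta g a p r k2)) /\
  (* (iii) cross-partials of B_j (both orders of differentiation) *)
  (forall (a p k : R), 0 <= a -> 0 <= p -> 0 < k ->
     is_derive (fun k' => Derive (fun a' => Bj alpha beta g a' p k') a) k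
               (alpha * Derive g k) /\
     is_derive (fun a' => Derive (fun k' => Bj alpha beta g a' p k') k) a
               (alpha * Derive g k) /\
     is_derive (fun k' => Derive (fun p' => Bj alpha beta g a p' k') p) k
               (beta * Derive g k) /\
     is_derive (fun p' => Derive (fun k' => Bj alpha beta g a p' k') k) p
               (beta * Derive g k) /\
     0 < alpha * Derive g k /\ 0 < beta * Derive g k).
Proof.
  intro Deltag.
  assert (HD : 0 < Deltag).
  { unfold Deltag. assert (1 < / pig). { rewrite <- Rinv_1. apply Rinv_lt_contravar; lra. } lra. }
  split; [|split].
  - intros r th k1 k2 _ _ _ _.
    unfold VM, Vg, Estar. rewrite !Bj00. repeat split; reflexivity.
  - intros a p r Ha Hp Hr Hap.
    assert (Hc : 0 < alpha * a + beta * p) by (destruct (Rlt_or_le 0 a); nra).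
    assert (HB : forall k, 0 <= k -> 1 <= Bj alpha beta g a p k).
    { intros k Hk. unfold Bj. specialize (Hgpos k Hk). nra. }
    assert (HP : 1 <= Pj delta r) by (unfold Pj; nra).
    assert (Hid : forall k, 0 <= k ->
        Vg pig alpha beta delta g a p r k - VM alpha beta delta g a p r k
        = Deltag * (Bj alpha beta g a p k) ^ 3
                 / (Bj alpha beta g a p k + Pj delta r) ^ 2).
    { intros k Hk. specialize (HB k Hk). unfold Vg, VM, Vvar, Estar, Uj, Deltag.
      field. lra. }
    split; [exact Hid|].
    intros k1 k2 Hk1 Hk12.
    assert (Hk2 : 0 <= k2) by lra.
    pose proof (HB k1 Hk1) as HB1. pose proof (HB k2 Hk2) as HB2.
    assert (HBl : Bj alpha beta g a p k1 < Bj alpha beta g a p k2).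
    { unfold Bj. pose proof (Hgmono k1 k2 Hk1 Hk12). nra. }
    rewrite (Hid k1 Hk1), (Hid k2 Hk2).
    unfold Estar.
    set (B1 := Bj alpha beta g a p k1) in *.
    set (B2 := Bj alpha beta g a p k2) in *.
    set (P := Pj delta r) in *.
    assert (HE : B1 / (B1 + P) < B2 / (B2 + P)).
    { apply Rminus_gt_0_lt.
      replace (B2 / (B2 + P) - B1 / (B1 + P)) with (P * (B2 - B1) / ((B1 + P) * (B2 + P))) by (field; lra).
      apply Rdiv_lt_0_compat; nra. }
    split; [exact HE|].
    replace (Deltag * B1 ^ 3 / (B1 + P) ^ 2) with (Deltag * (B1 * (B1 / (B1 + P)) ^ 2)) by (field; lra).
    replace (Deltag * B2 ^ 3 / (B2 + P) ^ 2) with (Deltag * (B2 * (B2 / (B2 + P)) ^ 2)) by (field; lra).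
    apply Rmult_lt_compat_l; [exact HD|].
    assert (0 < B1 / (B1 + P)) by (apply Rdiv_lt_0_compat; lra).
    set (E1 := B1 / (B1 + P)) in *. set (E2 := B2 / (B2 + P)) in *.
    assert (E1 ^ 2 < E2 ^ 2) by nra.
    nra.
  - intros a p k Ha Hp Hk.
    pose proof (Hgder k Hk) as Hex. pose proof (Hgder_pos k Hk) as Hpos.
    split;[|split;[|split;[|split;[|split]]]].
    + apply (is_derive_ext (fun k' => alpha * g k')).
      { intro t. rewrite dBa. reflexivity. }
      apply is_derive_scal. apply Derive_correct; auto.
    + apply (is_derive_ext (fun a' => (alpha * a' + beta * p) * Derive g k)).
      { intro t. symmetry. apply is_derive_unique. unfold Bj. apply dBk_is; auto. }
      auto_derive; auto. ring.
    + apply (is_derive_ext (fun k' => beta * g k')).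
      { intro t. rewrite dBp. reflexivity. }
      apply is_derive_scal. apply Derive_correct; auto.
    + apply (is_derive_ext (fun p' => (alpha * a + beta * p') * Derive g k)).
      { intro t. symmetry. apply is_derive_unique. unfold Bj. apply dBk_is; auto. }
      auto_derive; auto. ring.
    + nra.
    + nra.
Qed.
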